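(* Let $\mathsf{L}$ be a logic, $\mathsf{L}'$ a fragment of $\mathsf{L}$, $\mathcal{C}$ a class of $\mathsf{L}$-models and $\Theta$ an $(\mathsf{L},\mathcal{C})$-pair. Let $\mathcal{S}\subseteq\mathcal{C}$ be a finite set of $\mathsf{L}$-models and $\mathcal{R}\subseteq\mathsf{Fm}^f_{\mathsf{L}}$ an $(\mathsf{L},\mathcal{S})$-learning property. If some (final) $\mathsf{L}'$-formula belongs to $\mathcal{R}$, then some $\mathsf{L}'$-formula $\psi\in\mathcal{R}$ satisfies $\mathsf{sz}(\psi)\le\sum_{\tau\in\mathcal{T}}\prod_{M\in\mathcal{S}}|\mathsf{SEM}_M(\tau)|$.
   Context: A logic $\mathsf{L}$ is given by $(\mathcal{T},\mathcal{T}_f,\mathsf{Op},(\tau_o)_{o\in\mathsf{Op}},T)$: a non-empty finite set $\mathcal{T}$ of types, final types $\emptyset\ne\mathcal{T}_f\subseteq\mathcal{T}$, operators $\mathsf{Op}=\mathsf{Op}_0\uplus\mathsf{Op}_1\uplus\mathsf{Op}_2$ (by arity) with $\mathsf{Op}_0\ne\emptyset$, each $o$ having a type $\tau_o$ and allowed argument-type sets $T(o,i)\subseteq\mathcal{T}$. Formulas of type $\tau$ ($\mathsf{Fm}_{\mathsf{L}}(\tau)$) are built inductively: $o\in\mathsf{Op}_0$ has type $\tau_o$; $o(\varphi_1)$, resp. $o(\varphi_1,\varphi_2)$, has type $\tau_o$ when each $\varphi_i$ has a type in $T(o,i)$. $\mathsf{Fm}_{\mathsf{L}}(X)=\bigcup_{\tau\in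 X}\mathsf{Fm}_{\mathsf{L}}(\tau)$, final formulas $\mathsf{Fm}^f_{\mathsf{L}}=\mathsf{Fm}_{\mathsf{L}}(\mathcal{T}_f)$. A fragment $\mathsf{L}'$ uses the same syntax with an operator set $\mathsf{Op}'\subseteq\mathsf{Op}$. $\mathsf{sz}(\varphi)$ is the number of distinct subformulas of $\varphi$. An $\mathsf{L}$-model $M$ has a satisfaction relation $M\models\varphi$ for final formulas; a class of models is a set of them. An $(\mathsf{L},\mathcal{S})$-learning property is a set $\mathcal{R}\subseteq\mathsf{Fm}^f_{\mathsf{L}}$ such that, with $\mathcal{R}_{\mathcal{S}}=\{\{M\in\mathcal{S}: M\models\varphi\}:\varphi\in\mathcal{R}\}$, every final formula $\varphi$ satisfies: $\{M\in\mathcal{S}:M\models\varphi\}\in\mathcal{R}_{\mathcal{S}}$ iff $\varphi\in\mathcal{R}$. An $(\mathsf{L},M)$-pair: a finite set $\mathsf{SEM}_M=\bigcup_\tau\mathsf{SEM}_M(\tau)$ with pairwise disjoint parts and $\mathsf{sem}_M:\mathsf{Fm}_{\mathsf{L}}\to\mathsf{SEM}_M$ sending type-$\tau$ formulas into $\mathsf{SEM}_M(\tau)$; $\mathsf{SEM}_M(X)=\bigcup_{\tau\in X}\mathsf{SEM}_M(\tau)$. It captures the $\mathsf{L}$-semantics if final formulas of the same type with the same $\mathsf{sem}_M$-value are either both satisfied or both not satisfied by $M$. It satisfies the inductive property if for every $o\in\mathsf{Op}_1$ there is $\mathsf{sem}^o_M:\mathsf{SEM}_M(T(o,1))\to\mathsf{SEM}_M(\tau_o)$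 with $\mathsf{sem}_M(o(\varphi_1))=\mathsf{sem}^o_M(\mathsf{sem}_M(\varphi_1))$ for all $\varphi_1\in\mathsf{Fm}_{\mathsf{L}}(T(o,1))$, and for every $o\in\mathsf{Op}_2$ there is $\mathsf{sem}^o_M:\mathsf{SEM}_M(T(o,1))\times\mathsf{SEM}_M(T(o,2))\to\mathsf{SEM}_M(\tau_o)$ with $\mathsf{sem}_M(o(\varphi_1,\varphi_2))=\mathsf{sem}^o_M(\mathsf{sem}_M(\varphi_1),\mathsf{sem}_M(\varphi_2))$. An $(\mathsf{L},\mathcal{C})$-pair is a family $(\Theta_M)_{M\in\mathcal{C}}$ of $(\mathsf{L},M)$-pairs $\Theta_M=(\mathsf{SEM}_M,\mathsf{sem}_M)$ each capturing the $\mathsf{L}$-semantics and satisfying the inductive property. *)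

(* Defs.v *)
From HB Require Import structures.
From mathcomp Require Import all_boot.
From Stdlib Require List.
Set Implicit Arguments. Unset Strict Implicit. Unset Printing Implicit Defensive.

(* A logic L = (T, T_f, Op, (tau_o), T(o,i)).  Op = Op0 ⊎ Op1 ⊎ Op2 by arity. *)
Record logic := Logic {
  ty : finType;
  final : {set ty};
  op0 : eqType; op1 : eqType; op2 : eqType;
  tau0 : op0 -> ty; tau1 : op1 -> ty; tau2 : op2 -> ty;
  arg1 : op1 -> {set ty};
  arg21 : op2 -> {set ty};
  arg22 : op2 -> {set ty};
  ty_inhabited : inhabited ty;
  final_nonempty : final != set0;
  op0_inhabited : inhabited op0 }.

Inductive fm (L : logic) :=
| F0 of op0 L
| F1 of op1 L & fm L
| F2 of op2 L & fm L & fm L.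

Arguments F0 {L}. Arguments F1 {L}. Arguments F2 {L}.

Fixpoint fm_eqb (L : logic) (a b : fm L) : bool :=
  match a, b with
  | F0 o, F0 o' => o == o'
  | F1 o a1, F1 o' b1 => (o == o') && fm_eqb a1 b1
  | F2 o a1 a2, F2 o' b1 b2 => [&& o == o', fm_eqb a1 b1 & fm_eqb a2 b2]
  | _, _ => false
  end.

Lemma fm_eqP (L : logic) : Equality.axiom (@fm_eqb L).
Proof.
elim=> [o|o a IH|o a IHa c IHc] [o'|o' b|o' b d] /=; try by constructor.
- by apply: (iffP eqP) => [->|[]].
- case: (o =P o') => [->|ne] /=; last by constructor => -[].
  by case: (IH b) => [->|ne]; constructor => //; case.
- case: (o =P o') => [->|ne] /=; last by constructor => -[].
  case: (IHa b) => [->|ne] /=; last by constructor => -[].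
  by case: (IHc d) => [->|ne]; constructor => //; case.
Qed.

HB.instance Definition _ (L : logic) := hasDecEq.Build (fm L) (@fm_eqP L).

Section Syntax.
Variable L : logic.

Definition fm_ty (phi : fm L) : ty L :=
  match phi with F0 o => tau0 o | F1 o _ => tau1 o | F2 o _ _ => tau2 o end.

Fixpoint wt (phi : fm L) : bool :=
  match phi with
  | F0 _ => true
  | F1 o a => wt a && (fm_ty a \in arg1 o)
  | F2 o a b => [&& wt a, fm_ty a \in arg21 o, wt b & fm_ty b \in arg22 o]
  end.

Definition has_type (phi : fm L) (tau : ty L) : bool := wt phi && (fm_ty phi == tau).
Definition in_Fm (X : {set ty L}) (phi : fm L) : bool := wt phi && (fm_ty phi \in X).
Definition is_final (phi : fm L) : bool := in_Fm (final L) phi.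

Fixpoint subfms (phi : fm L) : seq (fm L) :=
  match phi with
  | F0 _ => [:: phi]
  | F1 _ a => phi :: subfms a
  | F2 _ a b => phi :: subfms a ++ subfms b
  end.
Definition sz (phi : fm L) : nat := size (undup (subfms phi)).

End Syntax.

Record fragment (L : logic) := Fragment {
  fop0 : pred (op0 L); fop1 : pred (op1 L); fop2 : pred (op2 L) }.

Fixpoint in_frag (L : logic) (L' : fragment L) (phi : fm L) : bool :=
  match phi with
  | F0 o => fop0 L' o
  | F1 o a => fop1 L' o && in_frag L' a
  | F2 o a b => [&& fop2 L' o, in_frag L' a & in_frag L' b]
  end.

Definition learning_property (L : logic) (Model : Type)
  (sat : Model -> fm L -> Prop) (S : list Model) (R : fm L -> Prop) : Prop :=
  (forall phi, R phi -> is_final phi) /\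
  (forall phi, is_final phi ->
     ((exists2 psi, R psi & forall M, List.In M S -> (sat M phi <-> sat M psi))
      <-> R phi)).

(* (L,M)-pair: a finite set SEM_M whose elements are tagged by their type
   (semty), so SEM_M(tau) = {s | semty s = tau} are pairwise disjoint with
   union SEM_M; and sem_M : Fm_L -> SEM_M respecting types. *)
Definition sem_part (L : logic) (SEM : finType) (semty : SEM -> ty L)
  (X : {set ty L}) (s : SEM) : bool := semty s \in X.

Definition LM_pair (L : logic) (Model : Type) (sat : Model -> fm L -> Prop)
  (M : Model) (SEM : finType) (semty : SEM -> ty L) (sem : fm L -> SEM) : Prop :=
  (forall phi, wt phi -> semty (sem phi) = fm_ty phi) /\
  (forall phi psi, is_final phi -> is_final psi -> fm_ty phi = fm_ty psi ->
     sem phi = sem psi -> (sat M phi <-> sat M psi)) /\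
  (forall o : op1 L, exists f : SEM -> SEM,
     (forall s, semty s \in arg1 o -> semty (f s) = tau1 o) /\
     (forall phi, in_Fm (arg1 o) phi -> sem (F1 o phi) = f (sem phi))) /\
  (forall o : op2 L, exists f : SEM -> SEM -> SEM,
     (forall s t, semty s \in arg21 o -> semty t \in arg22 o ->
        semty (f s t) = tau2 o) /\
     (forall phi psi, in_Fm (arg21 o) phi -> in_Fm (arg22 o) psi ->
        sem (F2 o phi psi) = f (sem phi) (sem psi))).

Definition LC_pair (L : logic) (Model : Type) (sat : Model -> fm L -> Prop)
  (C : Model -> Prop) (SEM : Model -> finType)
  (semty : forall M, SEM M -> ty L) (sem : forall M, fm L -> SEM M) : Prop :=
  forall M, C M -> LM_pair sat M (@semty M) (@sem M).

Definition card_sem (L : logic) (SEM : finType) (semty : SEM -> ty L) (tau : ty L) : nat :=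
  #|[pred s : SEM | semty s == tau]|.

(* Main.v *)
Require Import Defs.
From HB Require Import structures.
From mathcomp Require Import all_boot.
From Stdlib Require List Classical.
Set Implicit Arguments. Unset Strict Implicit. Unset Printing Implicit Defensive.

Fixpoint fsize (L : logic) (t : fm L) : nat :=
  match t with F0 _ => 1 | F1 _ a => (fsize a).+1 | F2 _ a b => (fsize a + fsize b).+1 end.

Lemma subfms_self (L : logic) (t : fm L) : t \in subfms t.
Proof. by case: t => * /=; rewrite inE eqxx. Qed.

Lemma subfms_trans (L : logic) (t z w : fm L) :
  z \in subfms t -> w \in subfms z -> w \in subfms t.
Proof.
elim: t => [o|o a IH|o a IHa b IHb] /=.
- by rewrite inE => /eqP ->.
- rewrite inE => /orP [/eqP -> //|/IH H /H]; by rewrite inE => ->; rewrite orbT.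
- rewrite inE mem_cat => /orP [/eqP -> //|/orP [/IHa H /H|/IHb H /H]];
  by rewrite inE mem_cat => ->; rewrite ?orbT.
Qed.

Lemma fsize_sub (L : logic) (t z : fm L) : z \in subfms t -> z = t \/ fsize z < fsize t.
Proof.
elim: t => [o|o a IH|o a IHa b IHb] /=.
- by rewrite inE => /eqP ->; left.
- rewrite inE => /orP [/eqP ->|/IH [->|H]]; [by left|right=>//|right].
  exact: ltnW.
- rewrite inE mem_cat => /orP [/eqP ->|/orP [/IHa [->|H]|/IHb [->|H]]]; [by left| | | |];
  right; rewrite ltnS ?leq_addr ?leq_addl //.
  + by rewrite (leq_trans (ltnW H)) ?leq_addr.
  + by rewrite (leq_trans (ltnW H)) ?leq_addl.
Qed.

Lemma wt_sub (L : logic) (t z : fm L) : wt t -> z \in subfms t -> wt z.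
Proof.
elim: t => [o|o a IH|o a IHa b IHb] /=.
- by move=> _; rewrite inE => /eqP ->.
- move=> /andP [wa ta]; rewrite inE => /orP [/eqP -> /=|/IH]; [by rewrite wa| exact].
- move=> /and4P [wa ta wb tb]; rewrite inE mem_cat => /orP [/eqP -> /=|/orP [/IHa|/IHb]];
  [by rewrite wa ta wb tb| exact| exact].
Qed.

Lemma frag_sub (L : logic) (L' : fragment L) (t z : fm L) :
  in_frag L' t -> z \in subfms t -> in_frag L' z.
Proof.
elim: t => [o|o a IH|o a IHa b IHb] /=.
- by move=> H; rewrite inE => /eqP ->.
- move=> /andP [wa ta]; rewrite inE => /orP [/eqP -> /=|/(IH ta)]; [by rewrite wa ta| exact].
- move=> /and3P [wa ta tb]; rewrite inE mem_cat => /orP [/eqP -> /=|/orP [/(IHa ta)|/(IHb tb)]];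
  [by rewrite wa ta tb| exact| exact].
Qed.

Fixpoint rep (L : logic) (x y t : fm L) : fm L :=
  if t == x then y else
  match t with
  | F0 _ => t
  | F1 o a => F1 o (rep x y a)
  | F2 o a b => F2 o (rep x y a) (rep x y b)
  end.

Lemma rep_ty (L : logic) (x y t : fm L) : wt y -> fm_ty x = fm_ty y -> wt t ->
  wt (rep x y t) /\ fm_ty (rep x y t) = fm_ty t.
Proof.
move=> wy txy; elim: t => [o|o a IH|o a IHa b IHb] /=;
  (case: ifP => [/eqP E _|_]; first by split => //; rewrite -txy -E) => //.
- move=> /andP [wa ta]; case: (IH wa) => w1 t1.
  by rewrite /= w1 t1 ta.
- move=> /and4P [wa ta wb tb].
  case: (IHa wa) => w1 t1; case: (IHb wb) => w2 t2.
  by rewrite /= w1 t1 ta w2 t2 tb.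
Qed.

Lemma rep_frag (L : logic) (L' : fragment L) (x y t : fm L) :
  in_frag L' y -> in_frag L' t -> in_frag L' (rep x y t).
Proof.
move=> fy; elim: t => [o|o a IH|o a IHa b IHb] /=; case: ifP => //= _.
- by move=> /andP [-> /IH ->].
- by move=> /and3P [-> /IHa -> /IHb ->].
Qed.

Lemma rep_subfms (L : logic) (x y t : fm L) :
  {subset subfms (rep x y t) <= [seq rep x y z | z <- subfms t] ++ subfms y}.
Proof.
elim: t => [o|o a IH|o a IHa b IHb] w /=; case: ifP => [_|ne];
  rewrite ?mem_cat ?orbT //=.
- by move=> H; rewrite inE H orbT.
- by rewrite !inE => ->.
- by move=> H; rewrite inE mem_cat H !orbT.
- rewrite !inE => /orP [->//|/IH]; rewrite mem_cat => /orP[H|H];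
  by rewrite H ?orbT.
- by move=> H; rewrite inE mem_cat H !orbT.
- rewrite !inE mem_cat => /orP [->//|/orP [/IHa|/IHb]];
  rewrite ?map_cat !mem_cat => /orP[->|->]; by rewrite ?orbT.
Qed.

Lemma rep_id (L : logic) (x y t : fm L) : x \notin subfms t -> rep x y t = t.
Proof.
elim: t => [o|o a IH|o a IHa b IHb] /=.
- by rewrite inE => ne; rewrite eq_sym (negbTE ne).
- rewrite inE => /norP [ne H]; by rewrite eq_sym (negbTE ne) IH.
- rewrite inE mem_cat => /norP [ne /norP [Ha Hb]].
  by rewrite eq_sym (negbTE ne) IHa ?IHb.
Qed.

Lemma rep_self (L : logic) (x y : fm L) : rep x y x = y.
Proof. by case: x => * /=; rewrite eqxx. Qed.

Lemma sem_rep (L : logic) (Model : Type) (sat : Model -> fm L -> Prop) (M : Model)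
  (SEMt : finType) (semty : SEMt -> ty L) (semM : fm L -> SEMt) (x y : fm L) :
  LM_pair sat M semty semM -> wt y -> fm_ty x = fm_ty y -> semM x = semM y ->
  forall t, wt t -> semM (rep x y t) = semM t.
Proof.
move=> [_ [_ [H1 H2]]] wy txy sxy.
elim => [o|o a IH|o a IHa b IHb] /=;
  (case: ifP => [/eqP E _|_]; first by rewrite E sxy) => //.
- move=> /andP [wa ta]; have [f [_ Hf]] := H1 o.
  case: (rep_ty wy txy wa) => w1 t1.
  rewrite !Hf ?IH // /in_Fm ?w1 ?t1 ?wa //.
- move=> /and4P [wa ta wb tb]; have [f [_ Hf]] := H2 o.
  case: (rep_ty wy txy wa) => w1 t1; case: (rep_ty wy txy wb) => w2 t2.
  rewrite !Hf ?IHa ?IHb // /in_Fm ?w1 ?t1 ?wa ?w2 ?t2 ?wb //.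
Qed.

Lemma size_part (T : eqType) (F : finType) (f : T -> F) (s : seq T) :
  size s = \sum_(a : F) count (fun z => f z == a) s.
Proof.
elim: s => [|z s IH] /=; first by rewrite big1.
rewrite big_split /= -IH (bigD1 (f z)) //= eqxx big1 ?addn0 //.
by move=> a ne; rewrite eq_sym (negbTE ne).
Qed.

Lemma count_bound (L : logic) (Model : Type)
  (SEM : Model -> finType) (semty : forall M, SEM M -> ty L)
  (sem : forall M, fm L -> SEM M) (tau : ty L) (S : list Model) (X : seq (fm L)) :
  uniq X ->
  (forall z M, z \in X -> List.In M S -> semty M (sem M z) = tau) ->
  {in X &, forall x y, (forall M, List.In M S -> sem M x = sem M y) -> x = y} ->
  size X <= \prod_(M <- S) card_sem (@semty M) tau.
Proof.
elim: S X => [|M S IH] X uX Hty Hinj.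
  rewrite big_nil; case: X uX Hinj {Hty} => [|a [|b X]] //= uX Hinj.
  have E : a = b by apply: Hinj; rewrite ?inE ?eqxx ?orbT.
  by move: uX; rewrite E inE eqxx.
rewrite big_cons (size_part (@sem M)) (bigID (fun s => semty M s == tau)) /=.
rewrite [X in _ + X]big1 ?addn0; last first.
  move=> s ne; apply/eqP; rewrite -leqn0 leqNgt -has_count; apply/hasP => -[z zX /eqP E].
  by move: ne; rewrite -E Hty ?eqxx //=; left.
rewrite /card_sem -sum_nat_const.
apply: leq_sum => s /= /eqP Es.
rewrite -size_filter; apply: IH.
- exact: filter_uniq.
- by move=> z M' ; rewrite mem_filter => /andP [_ zX] HM'; apply: Hty => //; right.
- move=> a b; rewrite !mem_filter => /andP [/eqP Ea aX] /andP [/eqP Eb bX] H.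
  apply: Hinj => // M' /= [<-|HM']; [by rewrite Ea Eb | exact: H].
Qed.

Theorem proposition6 (L : logic) (L' : fragment L) (Model : Type)
  (sat : Model -> fm L -> Prop) (C : Model -> Prop)
  (SEM : Model -> finType) (semty : forall M, SEM M -> ty L)
  (sem : forall M, fm L -> SEM M)
  (S : list Model) (R : fm L -> Prop) :
  LC_pair sat C semty sem ->
  List.NoDup S -> (forall M, List.In M S -> C M) ->
  learning_property sat S R ->
  (exists phi, in_frag L' phi /\ R phi) ->
  exists psi, [/\ in_frag L' psi, R psi &
    (sz psi <= \sum_(tau : ty L) \prod_(M <- S) card_sem (@semty M) tau)%N].
Proof.
move=> HC _ HS [HRf HR] [phi0 [f0 R0]].
set bound := \sum_(tau : ty L) _.
have step : forall phi, in_frag L' phi -> R phi -> (sz phi <= bound) \/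
    exists phi', [/\ in_frag L' phi', R phi' & sz phi' < sz phi].
  move=> phi fphi Rphi.
  have finphi := HRf _ Rphi.
  have wphi : wt phi by move: finphi => /andP [].
  case: (Classical_Prop.classic (exists x y, [/\ x \in subfms phi, y \in subfms phi,
     x <> y, fm_ty x = fm_ty y & forall M, List.In M S -> sem M x = sem M y]))
    => [[x0 [y0 [xs0 ys0 nxy0 txy0 sxy0]]]|NP].
  - right.
    have key : forall x y, x \in subfms phi -> y \in subfms phi -> x <> y ->
        fm_ty x = fm_ty y -> (forall M, List.In M S -> sem M x = sem M y) ->
        fsize y <= fsize x ->
        exists phi', [/\ in_frag L' phi', R phi' & sz phi' < sz phi].
      move=> x y xs ys nxy txy sxy le.
      have wy := wt_sub wphi ys.
      have xny : x \notin subfms y.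
        apply/negP => /fsize_sub [//|lt]; by move: le; rewrite leqNgt lt.
      have repid : forall z, z \in subfms y -> rep x y z = z.
        move=> z zy; apply: rep_id; apply/negP => xz; move/negP: xny; apply.
        exact: subfms_trans zy xz.
      exists (rep x y phi).
      case: (rep_ty wy txy wphi) => w' t'.
      have fin' : is_final (rep x y phi).
        by rewrite /is_final /in_Fm w' t'; move: finphi => /andP [].
      split.
      + exact: rep_frag (frag_sub fphi ys) fphi.
      + apply/(HR _ fin'); exists phi => // M HM.
        have LM := HC M (HS M HM).
        apply: (proj1 (proj2 LM)) => //.
        exact: sem_rep LM wy txy (sxy M HM) _ wphi.
      + have ys' : y \in undup (subfms phi) by rewrite mem_undup.
        rewrite /sz; apply: (@leq_ltn_trans (size (map (rep x y) (rem y (undup (subfms phi)))))).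
          apply: uniq_leq_size; first exact: undup_uniq.
          have hw : forall w, w \in subfms phi ->
              rep x y w \in map (rep x y) (rem y (undup (subfms phi))).
            move=> w ws; case: (w =P y) => [->|nwy].
              rewrite repid ?subfms_self // -{1}(rep_self x y).
              apply: map_f; rewrite mem_rem_uniq ?undup_uniq // inE mem_undup xs andbT.
              by apply/eqP.
            by apply: map_f; rewrite mem_rem_uniq ?undup_uniq // inE mem_undup ws andbT; apply/eqP.
          move=> z; rewrite mem_undup => /rep_subfms; rewrite mem_cat => /orP [].
            by move=> /mapP [w ws ->]; apply: hw.
          move=> zy; rewrite -(repid z zy); apply: hw.
          exact: subfms_trans ys zy.
        rewrite size_map size_rem //.
        by case: (undup (subfms phi)) ys'.
    case: (leqP (fsize y0) (fsize x0)) => le.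
      exact: key xs0 ys0 nxy0 txy0 sxy0 le.
    apply: key ys0 xs0 _ _ _ (ltnW le) => //.
    + by move=> E; apply: nxy0.
    + by move=> M HM; rewrite sxy0.
  - left.
    rewrite /sz (size_part (@fm_ty L)) /bound; apply: leq_sum => tau _.
    rewrite -size_filter; apply: count_bound.
    + exact/filter_uniq/undup_uniq.
    + move=> z M; rewrite mem_filter mem_undup => /andP [/eqP <- zs] HM.
      exact: (proj1 (HC M (HS M HM))) z (wt_sub wphi zs).
    + move=> a b; rewrite !mem_filter !mem_undup => /andP [/eqP ta aX] /andP [/eqP tb bX] H.
      case: (a =P b) => // nab; exfalso; apply: NP; exists a, b; split => //.
      by rewrite ta tb.
suff main : forall n phi, sz phi <= n -> in_frag L' phi -> R phi ->
  exists psi, [/\ in_frag L' psi, R psi & sz psi <= bound].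
  exact: main _ phi0 (leqnn _) f0 R0.
elim=> [|n IH] phi le fphi Rphi; case: (step phi fphi Rphi) => [ok|[phi' [f' R' lt]]];
  try by exists phi.
  by move: (leq_trans lt le).
by apply: (IH phi' _ f' R'); rewrite -ltnS (leq_trans lt).
Qed.
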